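(* Let $f(x_1,x_2)=(-2+x_1+x_2)^2$ and $g(x_1,x_2)=1-x_1^2-x_2^2$; the global minimum of $f$ on $\{x\in\mathbb{R}^2: g(x)\geqslant 0\}$ is $2(3-2\sqrt{2})$. For every integer $d\geqslant 1$, the order-$d$ SDSOS (dual) relaxation $$\sup_{\lambda,\sigma_0,\sigma_1} \lambda \quad\text{s.t.}\quad f-\lambda=\sigma_0+\sigma_1 g,\ \lambda\in\mathbb{R},\ \sigma_0\in \mathrm{SDSOS}_d,\ \sigma_1\in\mathrm{SDSOS}_{d-1},$$ and the corresponding relaxed moment (primal) problem $$\inf_y L_y(f)\quad\text{s.t.}\quad y_0=1,\ \text{every principal submatrix of size at most }2\text{ of } M_d(y) \text{ and of } M_{d-1}(gy)\text{ is positive semidefinite},$$ both have optimal value $4(1-\sqrt{2})$, which is strictly smaller than the global minimum $2(3-2\sqrt{2})$ (the gap equals $2$).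
   Context: For $\alpha\in\mathbb{N}^2$ write $x^\alpha=x_1^{\alpha_1}x_2^{\alpha_2}$ and $|\alpha|=\alpha_1+\alpha_2$. $\mathrm{SDSOS}_d$ denotes the set of polynomials of the form $\sum_k (p_k x^{\alpha(k)}+q_k x^{\beta(k)})^2$ (finite sum) with $p_k,q_k\in\mathbb{R}$ and $\alpha(k),\beta(k)\in\mathbb{N}^2$, $|\alpha(k)|,|\beta(k)|\leqslant d$ (scaled diagonally-dominant sums of squares). For $y=(y_\alpha)_{|\alpha|\leqslant 2d}$ and $p=\sum_\alpha p_\alpha x^\alpha$, $L_y(p)=\sum_\alpha p_\alpha y_\alpha$; $M_d(y)=(y_{\alpha+\beta})_{|\alpha|,|\beta|\leqslant d}$; $M_{d-1}(gy)=(y_{\alpha+\beta}-y_{\alpha+\beta+(2,0)}-y_{\alpha+\beta+(0,2)})_{|\alpha|,|\beta|\leqslant d-1}$. *)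

(* Defs.v *)
From mathcomp Require Import all_boot all_order all_algebra.
From mathcomp Require Import reals.
From mathcomp Require Import mpoly.
Import Order.TTheory GRing.Theory Num.Theory.
Set Implicit Arguments. Unset Strict Implicit. Unset Printing Implicit Defensive.
Local Open Scope ring_scope.

Section Defs.
Variable R : realType.

Definition mono (a b : nat) : 'X_{1..2} :=
  [multinom (if i == ord0 then a else b) | i < 2].

Definition fpoly : {mpoly R[2]} := (- 2%:MP + 'X_ord0 + 'X_(@Ordinal 2 1 isT)) ^+ 2.
Definition gpoly : {mpoly R[2]} := 1 - 'X_ord0 ^+ 2 - 'X_(@Ordinal 2 1 isT) ^+ 2.

Definition SDSOS (d : nat) (s : {mpoly R[2]}) : Prop :=
  exists (n : nat) (p q : 'I_n -> R) (a b : 'I_n -> 'X_{1..2}),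
    (forall k, (mdeg (a k) <= d)%N /\ (mdeg (b k) <= d)%N) /\
    s = \sum_(k < n) (p k *: 'X_[a k] + q k *: 'X_[b k]) ^+ 2.

Definition Ly (y : 'X_{1..2} -> R) (p : {mpoly R[2]}) : R :=
  \sum_(m <- msupp p) p@_m * y m.

Definition psd (n : nat) (A : 'M[R]_n) : Prop :=
  forall v : 'cV[R]_n, 0 <= (v^T *m A *m v) 0 0.

Definition momsub (y : 'X_{1..2} -> R) (k : nat) (s : 'I_k -> 'X_{1..2}) : 'M[R]_k :=
  \matrix_(i, j) y (s i + s j)%MM.

(* localizing matrix M_{d-1}(g y) restricted to rows/columns s i *)
Definition locsub (y : 'X_{1..2} -> R) (k : nat) (s : 'I_k -> 'X_{1..2}) : 'M[R]_k :=
  \matrix_(i, j) (y (s i + s j)%MM - y (s i + s j + mono 2 0)%MM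
                   - y (s i + s j + mono 0 2)%MM).

(* feasibility for the relaxed moment (primal) problem of order d.
   y is given on all monomials; only entries with |alpha| <= 2d are ever used. *)
Definition moment_feasible (d : nat) (y : 'X_{1..2} -> R) : Prop :=
  y 0%MM = 1 /\
  (forall (k : nat) (s : 'I_k -> 'X_{1..2}), (k <= 2)%N -> injective s ->
     (forall i, (mdeg (s i) <= d)%N) -> psd (momsub y s)) /\
  (forall (k : nat) (s : 'I_k -> 'X_{1..2}), (k <= 2)%N -> injective s ->
     (forall i, (mdeg (s i) <= d.-1)%N) -> psd (locsub y s)).

Definition sdsos_feasible (d : nat) (lam : R) : Prop :=
  exists s0 s1 : {mpoly R[2]},
    SDSOS d s0 /\ SDSOS d.-1 s1 /\ fpoly - lam%:MP = s0 + s1 * gpoly.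

Definition is_sup (S : R -> Prop) (v : R) : Prop :=
  (forall x, S x -> x <= v) /\ (forall e, 0 < e -> exists x, S x /\ v - e < x).
Definition is_inf (S : R -> Prop) (v : R) : Prop :=
  (forall x, S x -> v <= x) /\ (forall e, 0 < e -> exists x, S x /\ x < v + e).

End Defs.

(* Main.v *)
Require Import Defs.
From mathcomp Require Import all_boot all_order all_algebra.
From mathcomp Require Import reals.
From mathcomp Require Import mpoly.
Import Order.TTheory GRing.Theory Num.Theory.
Local Open Scope ring_scope.
From mathcomp Require Import ssrcomplements.
From mathcomp Require Import ring lra zify.
Set Implicit Arguments. Unset Strict Implicit.
Ltac mnm_solve := apply/mnmP => -[[|[|?]] ?] //; rewrite ?(mnmE, mulmnE, mnmDE, mnm1E, mnm0E) //.

Section L.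
Variable R : realType.
Variable y : 'X_{1..2} -> R.

Lemma LyE (p : {mpoly R[2]}) i : (msize p <= i)%N ->
  Ly y p = \sum_(m : 'X_{1..2 < i}) p@_m * y m.
Proof.
move=> le_pi; set I : subFinType _ := 'X_{1..2 < i}.
rewrite /Ly (big_mksub I) ?msupp_uniq //=; first last.
  by move=> x /msize_mdeg_lt /leq_trans; apply.
rewrite big_rmcond //= => j /memN_msupp_eq0 ->.
by rewrite mul0r.
Qed.

Lemma LyB p q : Ly y (p - q) = Ly y p - Ly y q.
Proof.
set i := (msize p + msize q + msize (p - q))%N.
rewrite !(@LyE _ i) /i; last 3 first.
- lia.
- lia.
- lia.
rewrite -sumrB; apply/eq_bigr => m _.
by rewrite mcoeffB mulrBl.
Qed.

Lemma LyZ c p : Ly y (c *: p) = c * Ly y p.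
Proof.
set i := (msize p + msize (c *: p))%N.
rewrite !(@LyE _ i) /i; last 2 first.
- lia.
- lia.
rewrite mulr_sumr; apply/eq_bigr => m _.
by rewrite mcoeffZ mulrA.
Qed.

Lemma LyX m : Ly y 'X_[m] = y m.
Proof. by rewrite /Ly msuppX big_seq1 mcoeffX eqxx mul1r. Qed.

Lemma Ly0 : Ly y 0 = 0.
Proof. by rewrite /Ly msupp0 big_nil. Qed.

Lemma LyN p : Ly y (- p) = - Ly y p.
Proof. by rewrite -sub0r LyB Ly0 sub0r. Qed.

Lemma LyD p q : Ly y (p + q) = Ly y p + Ly y q.
Proof. have -> : p + q = p - - q by rewrite opprK. by rewrite LyB LyN opprK. Qed.

Lemma Ly_sum n (F : 'I_n -> {mpoly R[2]}) : Ly y (\sum_(k < n) F k) = \sum_(k < n) Ly y (F k).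
Proof.
exact: (big_morph _ LyD Ly0).
Qed.

Lemma LyC c : Ly y c%:MP = c * y 0%MM.
Proof. by rewrite -[c%:MP]mulr1 mul_mpolyC -mpolyX0 LyZ LyX. Qed.

End L.

Section Q.
Variable R : realType.

Definition Qf (F : 'X_{1..2} -> R) a b (p q : R) :=
  p ^+ 2 * F (a + a)%MM + 2 * p * q * F (a + b)%MM + q ^+ 2 * F (b + b)%MM.

Lemma quad2 (A : 'M[R]_2) (v : 'cV[R]_2) :
  (v^T *m A *m v) 0 0 = 
  v 0 0 * A 0 0 * v 0 0 + v 0 0 * A 0 1 * v 1 0 + v 1 0 * A 1 0 * v 0 0 + v 1 0 * A 1 1 * v 1 0.
Proof.
rewrite !mxE !big_ord_recr !big_ord0 /= !mxE !big_ord_recr !big_ord0 /= !mxE.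
have -> : widen_ord (leqnSn 1) ord_max = 0 :> 'I_2 by apply/val_inj.
have -> : (ord_max : 'I_2) = 1 by apply/val_inj.
ring.
Qed.

Lemma quad1 (A : 'M[R]_1) (v : 'cV[R]_1) :
  (v^T *m A *m v) 0 0 = v 0 0 * A 0 0 * v 0 0.
Proof.
rewrite !mxE !big_ord_recr !big_ord0 /= !mxE !big_ord_recr !big_ord0 /= !mxE.
have -> : (ord_max : 'I_1) = 0 by apply/val_inj.
ring.
Qed.

Lemma psdQ (F : 'X_{1..2} -> R) (D : nat) a b p q :
  (forall (k : nat) (s : 'I_k -> 'X_{1..2}), (k <= 2)%N -> injective s ->
     (forall i, (mdeg (s i) <= D)%N) -> psd (\matrix_(i, j) F (s i + s j)%MM)) ->
  (mdeg a <= D)%N -> (mdeg b <= D)%N -> 0 <= Qf F a b p q.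
Proof.
move=> H ha hb.
have [<-|nab] := eqVneq a b.
  have := H 1%N (fun _ => a) isT.
  have inj : injective (fun _ : 'I_1 => a) by move=> i j _; rewrite (ord1 i) (ord1 j).
  move=> /(_ inj (fun _ => ha)) /(_ (\col_i (p + q))).
  rewrite quad1 !mxE /Qf => h.
  have -> : p ^+ 2 * F (a + a)%MM + 2 * p * q * F (a + a)%MM + q ^+ 2 * F (a + a)%MM
     = (p + q) * F (a + a)%MM * (p + q) by ring.
  exact: h.
pose s := fun i : 'I_2 => if i == 0 then a else b.
have inj : injective s.
  move=> i j; rewrite /s.
  case: (i =P 0) => [->|/eqP hi]; case: (j =P 0) => [->|/eqP hj] //=.
  - by move=> e; rewrite e eqxx in nab.
  - by move=> e; rewrite e eqxx in nab.
  - move=> _; apply/val_inj.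
    move: hi hj; case: i => [[|[|i]] Hi]; case: j => [[|[|j]] Hj] //.
have := H 2%N s isT inj.
have hs : forall i, (mdeg (s i) <= D)%N by move=> i; rewrite /s; case: ifP.
move=> /(_ hs) /(_ (\col_i (if i == 0 then p else q))).
rewrite quad2 !mxE /s /= /Qf => h.
have -> : p ^+ 2 * F (a + a)%MM + 2 * p * q * F (a + b)%MM + q ^+ 2 * F (b + b)%MM
  = p * F (a + a)%MM * p + p * F (a + b)%MM * q + q * F (b + a)%MM * p + q * F (b + b)%MM * q.
  rewrite [(b + a)%MM]addmC; ring.
exact: h.
Qed.

End Q.

Section P.
Variable R : realType.

Lemma XU (i : 'I_2) : 'X_i = 'X_[U_(i)] :> {mpoly R[2]}.
Proof. by []. Qed.


Lemma mono20 : (U_(ord0) *+ 2)%MM = mono 2 0 :> 'X_{1..2}.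
Proof. mnm_solve. Qed.

Lemma mono02 : (U_(Ordinal (isT : (1 < 2)%N)) *+ 2)%MM = mono 0 2 :> 'X_{1..2}.
Proof. mnm_solve. Qed.

Lemma gpolyE : gpoly R = 1 - 'X_[mono 2 0] - 'X_[mono 0 2].
Proof. by rewrite /gpoly !mpolyXn mono20 mono02. Qed.

Definition Lg (y : 'X_{1..2} -> R) m := y m - y (m + mono 2 0)%MM - y (m + mono 0 2)%MM.

Lemma Ly_Xg y m : Ly y ('X_[m] * gpoly R) = Lg y m.
Proof. by rewrite gpolyE !mulrBr mulr1 -!mpolyXD !LyB !LyX. Qed.

Lemma sq_expand (p q : R) a b : (p *: 'X_[a] + q *: 'X_[b])^+2 =
  p^+2 *: 'X_[a+a] + (2 * p * q) *: 'X_[a+b] + q^+2 *: 'X_[b+b] :> {mpoly R[2]}.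
Proof.
rewrite !mpolyXD -!mul_mpolyC !(rmorphM, rmorphXn, rmorph_nat).
ring.
Qed.

Lemma Ly_sq y (p q : R) a b : Ly y ((p *: 'X_[a] + q *: 'X_[b])^+2) = Qf y a b p q.
Proof. by rewrite sq_expand !LyD !LyZ !LyX. Qed.

Lemma Ly_sqg y (p q : R) a b :
  Ly y ((p *: 'X_[a] + q *: 'X_[b])^+2 * gpoly R) = Qf (Lg y) a b p q.
Proof. rewrite sq_expand !mulrDl -!scalerAl !LyD !LyZ !Ly_Xg /Qf; ring. Qed.

End P.

Section C.
Variable R : realType.

Lemma mono10 : mono 1 0 = (U_(ord0))%MM :> 'X_{1..2}.
Proof. mnm_solve. Qed.
Lemma mono01 : mono 0 1 = (U_(Ordinal (isT : (1 < 2)%N)))%MM :> 'X_{1..2}.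
Proof. mnm_solve. Qed.

Definition cp (r : R) := fun k : 'I_3 => [:: r; r; 1]`_k.
Definition cq (r : R) := fun k : 'I_3 => [:: - r ^+ 3; - r ^+ 3; 1]`_k.
Definition ca := fun k : 'I_3 => nth 0%MM [:: 0%MM; 0%MM; mono 1 0] k.
Definition cb := fun k : 'I_3 => nth 0%MM [:: mono 1 0; mono 0 1; mono 0 1] k.

Lemma cert_id (r t : R) : r ^+ 4 = 2 -> t ^+ 2 = 2 * r ^+ 2 ->
  fpoly R - (4 * (1 - r ^+ 2))%:MP =
  \sum_(k < 3) (cp r k *: 'X_[ca k] + cq r k *: 'X_[cb k]) ^+ 2 +
  (\sum_(k < 1) (t *: 'X_[0%MM] + 0 *: 'X_[0%MM]) ^+ 2) * gpoly R.
Proof.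
move=> h4 ht.
rewrite !big_ord_recr !big_ord0 /= /cp /ca /cq /cb /=.
rewrite /fpoly /gpoly mono10 mono01 mpolyX0 -!mul_mpolyC.
have H4 : (r%:MP) ^+ 4 = 2 :> {mpoly R[2]}.
  have : (r ^+ 4)%:MP = (2%:R)%:MP :> {mpoly R[2]} by rewrite h4.
  by rewrite !exprS !expr0 !mulr1 !mpolyCM mpolyC_nat.
have Ht : (t%:MP) ^+ 2 = 2 * (r%:MP) ^+ 2 :> {mpoly R[2]}.
  have : (t ^+ 2)%:MP = (2%:R * r ^+ 2)%:MP :> {mpoly R[2]} by rewrite ht.
  by rewrite !exprS !expr0 !mulr1 !mpolyCM mpolyC_nat.
move: H4 Ht.
set x0 := 'X_ord0. set x1 := 'X_(Ordinal _).
rewrite !exprS !expr0 !(mpolyCM, mpolyCN, mpolyCB, mpolyC1, mpolyC0, mpolyC_nat).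
set rr := r%:MP. set tt := t%:MP.
move=> H4 Ht.
apply/eqP; rewrite -subr_eq0; apply/eqP.
transitivity (- (rr * (rr * (rr * (rr * 1))) - 2) * (rr * rr * (x0 * x0 + x1 * x1) - 2 * (x0 + x1))
   - (tt * (tt * 1) - 2 * (rr * (rr * 1))) * (1 - x0 * x0 - x1 * x1)).
  ring.
by rewrite H4 Ht !subrr oppr0 !mul0r subrr.
Qed.
End C.

Section Y.
Variable R : realType.
Let i1 : 'I_2 := Ordinal (isT : (1 < 2)%N).
Definition sh : R := Num.sqrt 2 / 2.
Definition ystar (m : 'X_{1..2}) : R := (-1) ^+ (m ord0 * m i1)%N * sh ^+ mdeg m.

Lemma mdeg_mono a b : mdeg (mono a b) = (a + b)%N.
Proof. by rewrite mdegE !big_ord_recr big_ord0 /= !mnmE. Qed.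

Lemma sqrt2_sq : Num.sqrt 2 ^+ 2 = 2 :> R.
Proof. by rewrite sqr_sqrtr // ler0n. Qed.

Lemma sh_sq : sh ^+ 2 = 1 / 2.
Proof. rewrite /sh expr_div_n sqrt2_sq; by field. Qed.

Lemma sign_sq n : ((-1) ^+ n) ^+ 2 = 1 :> R.
Proof. exact: sqrr_sign. Qed.

Lemma sign_even n : (-1) ^+ (n * 2)%N = 1 :> R.
Proof. by rewrite exprM sqrr_sign. Qed.

Lemma ystar0 : ystar 0%MM = 1.
Proof. by rewrite /ystar !mnm0E mdeg0 !expr0 mulr1. Qed.

Lemma ystar_aa a : ystar (a + a)%MM = sh ^+ (mdeg a) ^+ 2.
Proof.
rewrite /ystar !mnmDE mdegD.
have -> : ((a ord0 + a ord0) * (a i1 + a i1))%N = ((a ord0 * (a i1 + a i1)) * 2)%N by lia.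
by rewrite sign_even mul1r -exprM mulnC mul2n addnn.
Qed.

Lemma ystar_ab a b : ystar (a + b)%MM ^+ 2 = ystar (a + a)%MM * ystar (b + b)%MM.
Proof.
rewrite !ystar_aa {1}/ystar exprMn sign_sq mul1r mdegD -!exprM -exprD; congr (_ ^+ _); lia.
Qed.

Lemma Lg_ystar m : Lg ystar m = 0.
Proof.
rewrite /Lg /ystar !mnmDE !mdegD !mdeg_mono !mnmE /=.
have -> : ((m ord0 + 2) * (m i1 + 0))%N = (m ord0 * m i1 + m i1 * 2)%N by lia.
have -> : ((m ord0 + 0) * (m i1 + 2))%N = (m ord0 * m i1 + m ord0 * 2)%N by lia.
rewrite !exprD !sign_even !mulr1 sh_sq. by field.
Qed.

Lemma psd2_crit (a b c x z : R) : 0 <= a -> 0 <= c -> b ^+ 2 <= a * c ->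
  0 <= x * a * x + x * b * z + z * b * x + z * c * z.
Proof.
move=> ha hc hb.
have [a0|apos] := eqVneq a 0.
  subst a. have : b ^+ 2 <= 0 by rewrite mul0r in hb.
  move=> hb2; have b0 : b = 0 by apply/eqP; rewrite -sqrf_eq0 eq_le hb2 sqr_ge0.
  subst b; nra.
have ap : 0 < a by rewrite lt_def apos ha.
have : 0 <= a * (x * a * x + x * b * z + z * b * x + z * c * z).
  have -> : a * (x * a * x + x * b * z + z * b * x + z * c * z) =
    (a * x + b * z) ^+ 2 + (a * c - b ^+ 2) * z ^+ 2 by ring.
  apply: addr_ge0; first exact: sqr_ge0.
  by apply: mulr_ge0; [rewrite subr_ge0 | exact: sqr_ge0].
by rewrite pmulr_rge0.
Qed.

Lemma ystar_feasible d : moment_feasible d ystar.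
Proof.
split; first exact: ystar0.
split.
  move=> k s hk _ _ v.
  move: s v hk; case: k => [|[|[|k]]] s v hk //.
  - by rewrite !mxE big_ord0.
  - rewrite quad1 !mxE ystar_aa; set w := sh ^+ _.
    have -> : v 0 0 * w ^+ 2 * v 0 0 = (v 0 0 * w) ^+ 2 by ring.
    exact: sqr_ge0.
  - rewrite quad2 !mxE (addmC (s 1)).
    apply: psd2_crit; rewrite ?ystar_aa ?sqr_ge0 //.
    by rewrite ystar_ab !ystar_aa.
move=> k s _ _ _ v.
have -> : locsub ystar s = 0 by apply/matrixP => i j; rewrite !mxE; exact: Lg_ystar.
by rewrite mulmx0 mul0mx mxE.
Qed.

End Y.

Section W.
Variable R : realType.

Lemma feas_sq d (y : 'X_{1..2} -> R) s0 : moment_feasible d y -> SDSOS d s0 -> 0 <= Ly y s0.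
Proof.
move=> [_ [Hm _]] [n [p [q [a [b [hdeg ->]]]]]].
rewrite Ly_sum; apply: sumr_ge0 => k _; rewrite Ly_sq.
have [ha hb] := hdeg k.
by apply: (psdQ (D := d)) ha hb => k0 s0' h1 h2 h3; exact: (Hm k0 s0' h1 h2 h3).
Qed.

Lemma feas_sqg d (y : 'X_{1..2} -> R) s1 : moment_feasible d y -> SDSOS d.-1 s1 ->
  0 <= Ly y (s1 * gpoly R).
Proof.
move=> [_ [_ Hl]] [n [p [q [a [b [hdeg ->]]]]]].
rewrite mulr_suml Ly_sum; apply: sumr_ge0 => k _; rewrite Ly_sqg.
have [ha hb] := hdeg k.
by apply: (psdQ (D := d.-1)) ha hb => k0 s0' h1 h2 h3; exact: (Hl k0 s0' h1 h2 h3).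
Qed.

Lemma weak_duality d (y : 'X_{1..2} -> R) lam :
  moment_feasible d y -> sdsos_feasible d lam -> lam <= Ly y (fpoly R).
Proof.
move=> Hy [s0 [s1 [h0 [h1 he]]]].
have : Ly y (fpoly R - lam%:MP) = Ly y s0 + Ly y (s1 * gpoly R) by rewrite he LyD.
rewrite LyB LyC; case: (Hy) => [-> _] => h.
rewrite mulr1 in h; rewrite -subr_ge0 h.
by apply: addr_ge0; [exact: feas_sq Hy h0 | exact: feas_sqg Hy h1].
Qed.

Lemma Ly_ystar_f : Ly (@ystar R) (fpoly R) = 4 * (1 - Num.sqrt 2).
Proof.
have fE : fpoly R = 4 *: 'X_[0] + (-4) *: 'X_[mono 1 0] + (-4) *: 'X_[mono 0 1]
   + 1 *: 'X_[mono 1 0 + mono 1 0] + 2 *: 'X_[mono 1 0 + mono 0 1] + 1 *: 'X_[mono 0 1 + mono 0 1].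
  rewrite /fpoly !mpolyXD mpolyX0 mono10 mono01 -!mul_mpolyC !(mpolyCN, mpolyC_nat, mpolyC1).
  ring.
rewrite fE !LyD !LyZ !LyX /ystar !mnmDE !mdegD !mdeg_mono !mnmE ?mnm0E ?mdeg0 /=.
rewrite !(addn0, add0n, muln0, mul0n, muln1, mul1n) addnn /sh.
by field.
Qed.
End W.

Section M.
Variable R : realType.
Let i1 : 'I_2 := Ordinal (isT : (1 < 2)%N).

Lemma cert_feasible d : (1 <= d)%N -> sdsos_feasible d (4 * (1 - Num.sqrt 2) : R).
Proof.
move=> hd.
set r := Num.sqrt (Num.sqrt 2 : R).
have hr2 : r ^+ 2 = Num.sqrt 2 by rewrite sqr_sqrtr // sqrtr_ge0.
have hr4 : r ^+ 4 = 2 by rewrite (_ : 4%N = (2 * 2)%N) // exprM hr2 sqrt2_sq.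
set t := Num.sqrt (2 * r ^+ 2).
have ht : t ^+ 2 = 2 * r ^+ 2 by rewrite sqr_sqrtr // mulr_ge0 // ?ler0n // sqr_ge0.
exists (\sum_(k < 3) (cp r k *: 'X_[ca k] + cq r k *: 'X_[cb k]) ^+ 2).
exists (\sum_(k < 1) (t *: 'X_[0%MM] + 0 *: 'X_[0%MM]) ^+ 2).
split; [|split].
- exists 3%N, (cp r), (cq r), ca, cb; split => //.
  move=> k; case: k => [[|[|[|?]]] ?] //=; rewrite /ca /cb /= ?mdeg_mono ?mdeg0; split; lia.
- exists 1%N, (fun _ => t), (fun _ => 0), (fun _ => 0%MM), (fun _ => 0%MM); split => //.
  by move=> k; rewrite mdeg0.
- by rewrite -hr2; exact: cert_id.
Qed.

Lemma f_eval (x : 'I_2 -> R) : (fpoly R).@[x] = (-2 + x ord0 + x i1) ^+ 2.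
Proof. by rewrite /fpoly !expr2 mevalM !mevalD mevalN mevalC !mevalXU. Qed.

Lemma g_eval (x : 'I_2 -> R) : (gpoly R).@[x] = 1 - x ord0 ^+ 2 - x i1 ^+ 2.
Proof. by rewrite /gpoly !expr2 !mevalB meval1 !mevalM !mevalXU. Qed.

End M.

Unset Implicit Arguments. Set Strict Implicit.

Theorem mainTheorem2 (R : realType) :
  ((exists x : 'I_2 -> R, 0 <= (gpoly R).@[x] /\
       (fpoly R).@[x] = 2 * (3 - 2 * Num.sqrt 2)) /\
   (forall x : 'I_2 -> R, 0 <= (gpoly R).@[x] ->
       2 * (3 - 2 * Num.sqrt 2) <= (fpoly R).@[x])) /\
  (forall d : nat, (1 <= d)%N ->
     is_sup (sdsos_feasible (R:=R) d) (4 * (1 - Num.sqrt 2)) /\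
     is_inf (fun v : R => exists y : 'X_{1..2} -> R,
                moment_feasible d y /\ Ly y (fpoly R) = v)
            (4 * (1 - Num.sqrt 2))) /\
  4 * (1 - Num.sqrt 2) < 2 * (3 - 2 * Num.sqrt 2 :> R) /\
  2 * (3 - 2 * Num.sqrt 2) - 4 * (1 - Num.sqrt 2) = 2 :> R.
Proof.
have h2 := sqrt2_sq R.
have hs : 0 <= Num.sqrt 2 :> R by exact: sqrtr_ge0.
split; [split|split; [|split]].
- exists (fun _ => Num.sqrt 2 / 2); rewrite f_eval g_eval; split.
  + have -> : 1 - (Num.sqrt 2 / 2) ^+ 2 - (Num.sqrt 2 / 2) ^+ 2 = 1 - Num.sqrt 2 ^+ 2 / 2 :> R by field.
    by rewrite h2; lra.
  + have -> : (-2 + Num.sqrt 2 / 2 + Num.sqrt 2 / 2) ^+ 2 = 4 - 4 * Num.sqrt 2 + Num.sqrt 2 ^+ 2 :> R by field.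
    by rewrite h2; ring.
- move=> x; rewrite f_eval g_eval.
  set a := x ord0; set b := x _; set s := Num.sqrt 2 in h2 hs * => hg.
  have hu2 : (a + b) ^+ 2 <= s ^+ 2.
    rewrite h2; have := sqr_ge0 (a - b); nra.
  have hu : a + b <= s.
    rewrite leNgt; apply/negP => h.
    have : 0 < (a + b - s) * (a + b + s) by apply: mulr_gt0; lra.
    have -> : (a + b - s) * (a + b + s) = (a + b) ^+ 2 - s ^+ 2 by ring.
    lra.
  have hs2 : s <= 2 by nra.
  nra.
- move=> d hd; split; split.
  + move=> x hx; rewrite -Ly_ystar_f; exact: weak_duality (ystar_feasible R d) hx.
  + move=> e he; exists (4 * (1 - Num.sqrt 2)); split; [exact: cert_feasible | lra].
  + by move=> v [y [hy <-]]; exact: weak_duality hy (cert_feasible R hd).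
  + move=> e he; exists (4 * (1 - Num.sqrt 2)); split; last by lra.
    exists (ystar R); split; [exact: ystar_feasible | exact: Ly_ystar_f].
- lra.
- ring.
Qed.
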